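(* Let $\mathbf A=(A;\cdot,\to,\leadsto,1)$ be a pseudo-hoop and let $x,y\in A$ be such that $x\vee y=1$. Then $x\cdot y=x\wedge y=y\cdot x$ and $x\to y=x\leadsto y=y$.
   Context: A pseudo-hoop is an algebra $(A;\cdot,\to,\leadsto,1)$ of type $\langle 2,2,2,0\rangle$ such that for all $x,y,z\in A$: $x\cdot 1=x=1\cdot x$; $x\to x=1=x\leadsto x$; $(x\cdot y)\to z=x\to(y\to z)$; $(x\cdot y)\leadsto z=y\leadsto(x\leadsto z)$; and $(x\to y)\cdot x=(y\to x)\cdot y=x\cdot(x\leadsto y)=y\cdot(y\leadsto x)$. Setting $x\le y$ iff $x\to y=1$ gives a partial order with greatest element $1$ in which $x\wedge y=(x\to y)\cdot x$. ''$x\vee y=1$'' means the supremum of $\{x,y\}$ exists and equals $1$. *)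

(* Defs.v *)
Record pseudo_hoop (A : Type) (mul imp1 imp2 : A -> A -> A) (one : A) : Prop := {
  ph_mul1r : forall x, mul x one = x;
  ph_mul1l : forall x, mul one x = x;
  ph_imp1_refl : forall x, imp1 x x = one;
  ph_imp2_refl : forall x, imp2 x x = one;
  ph_imp1_mul : forall x y z, imp1 (mul x y) z = imp1 x (imp1 y z);
  ph_imp2_mul : forall x y z, imp2 (mul x y) z = imp2 y (imp2 x z);
  ph_div1 : forall x y, mul (imp1 x y) x = mul (imp1 y x) y;
  ph_div2 : forall x y, mul (imp1 y x) y = mul x (imp2 x y);
  ph_div3 : forall x y, mul x (imp2 x y) = mul y (imp2 y x)
}.

Definition ph_le {A : Type} (imp1 : A -> A -> A) (one : A) (x y : A) : Prop :=
  imp1 x y = one.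

Definition ph_meet {A : Type} (mul imp1 : A -> A -> A) (x y : A) : A :=
  mul (imp1 x y) x.

Definition ph_is_sup {A : Type} (imp1 : A -> A -> A) (one : A) (x y s : A) : Prop :=
  ph_le imp1 one x s /\ ph_le imp1 one y s /\
  (forall u, ph_le imp1 one x u -> ph_le imp1 one y u -> ph_le imp1 one s u).

(* Main.v *)
Require Import Defs.
From Stdlib Require Import Setoid.

Theorem lemma4p1 (A : Type) (mul imp1 imp2 : A -> A -> A) (one : A)
  (H : @pseudo_hoop A mul imp1 imp2 one) (x y : A)
  (Hsup : ph_is_sup imp1 one x y one) :
  mul x y = ph_meet mul imp1 x y /\ ph_meet mul imp1 x y = mul y x /\
  imp1 x y = imp2 x y /\ imp2 x y = y.
Proof.
  destruct H as [m1r m1l i1 i2 im1 im2 d1 d2 d3].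
  assert (anti1 : forall a b, imp1 a b = one -> imp1 b a = one -> a = b).
  { intros a b h1 h2. pose proof (d1 a b) as E. rewrite h1, h2, !m1l in E. exact E. }
  assert (assoc : forall a b c, mul (mul a b) c = mul a (mul b c)).
  { intros a b c.
    assert (Hw : forall w, imp1 (mul (mul a b) c) w = imp1 (mul a (mul b c)) w)
      by (intro w; rewrite !im1; reflexivity).
    apply anti1; [rewrite Hw; apply i1 | rewrite <- Hw; apply i1]. }
  assert (onei : forall a, imp1 one a = a).
  { intro a.
    set (d := imp1 a one).
    assert (E1 : imp1 one d = d).
    { unfold d. rewrite <- im1, m1l. reflexivity. }
    assert (E2 : mul (imp1 d one) d = d).
    { rewrite d1, m1r. exact E1. }
    assert (E3 : imp1 one a = mul d a).
    { unfold d. rewrite d1, m1r. reflexivity. }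
    assert (E4 : imp1 (imp1 one a) a = imp1 d one).
    { rewrite E3, im1, i1. reflexivity. }
    assert (E5 : imp1 a (imp1 one a) = one).
    { rewrite <- im1, m1r, i1. reflexivity. }
    pose proof (d1 (imp1 one a) a) as E.
    rewrite E5, m1l, E4 in E.
    rewrite E3 in E. rewrite <- assoc, E2 in E.
    rewrite E3. exact E. }
  assert (i1one : forall a, imp1 a one = one).
  { intro a. pose proof (d1 a one) as E. rewrite (m1r (imp1 one a)), (onei a) in E.
    rewrite <- E at 1. rewrite im1, i1. reflexivity. }
  assert (i2one : forall a, imp2 a one = one).
  { intro a. pose proof (d2 a one) as E. rewrite m1r, onei in E.
    rewrite E at 1. rewrite im2, i2. reflexivity. }
  assert (le12 : forall a b, imp1 a b = one -> imp2 a b = one).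
  { intros a b h. pose proof (eq_trans (d1 a b) (d2 a b)) as E. rewrite h, m1l in E.
    rewrite E at 1. rewrite im2, i2. reflexivity. }
  assert (le21 : forall a b, imp2 a b = one -> imp1 a b = one).
  { intros a b h. pose proof (eq_trans (d1 a b) (d2 a b)) as E. rewrite h, m1r in E.
    rewrite <- E at 1. rewrite im1, i1. reflexivity. }
  assert (anti2 : forall a b, imp2 a b = one -> imp2 b a = one -> a = b).
  { intros a b h1 h2. pose proof (d3 a b) as E. rewrite h1, h2, !m1r in E. exact E. }
  assert (leb : forall a b, imp1 (mul a b) b = one).
  { intros a b. rewrite im1, i1, i1one. reflexivity. }
  assert (lea : forall a b, imp1 (mul a b) a = one).
  { intros a b. apply le21. rewrite im2, i2, i2one. reflexivity. }
  destruct Hsup as [_ [_ Hs]].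
  assert (Ey1 : imp1 x y = y).
  { apply anti1.
    - apply le21.
      assert (W : imp2 (imp1 x y) y = one).
      { rewrite <- (onei (imp2 (imp1 x y) y)). apply Hs.
        - apply le21. rewrite <- im2, d1. apply le12, leb.
        - apply le21. rewrite <- im2. apply le12, leb. }
      exact W.
    - rewrite <- im1. apply lea. }
  assert (Ey2 : imp2 x y = y).
  { apply anti2.
    - assert (W : imp1 (imp2 x y) y = one).
      { rewrite <- (onei (imp1 (imp2 x y) y)). apply Hs.
        + unfold ph_le. rewrite <- im1, <- d2. apply leb.
        + unfold ph_le. rewrite <- im1. apply lea. }
      apply le12. exact W.
    - rewrite <- im2. apply le12, leb. }
  unfold ph_meet. rewrite Ey1. repeat split.
  - rewrite <- Ey2 at 1. rewrite <- d2, <- d1, Ey1. reflexivity.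
  - rewrite Ey2. reflexivity.
  - exact Ey2.
Qed.
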